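(* The set $\mathfrak{C}(X;G)=\{C(Y): Y\subseteq X\}$ of canonical centralisers is a sublattice of the centraliser lattice $\mathfrak{C}(G)$. That is, for all $Y_1,Y_2\subseteq X$, both $C(Y_1)\wedge C(Y_2)=C(Y_1)\cap C(Y_2)$ and $C(Y_1)\vee C(Y_2)$ are of the form $C(Z)$ for some $Z\subseteq X$.
   Context: Let $\Gamma$ be a finite simple undirected graph with vertex set $X$, and let $G=G(\Gamma)=\langle X\mid [x,y]=1 \text{ whenever } x,y \text{ are joined by an edge of }\Gamma\rangle$ be the (free) partially commutative group with commutation graph $\Gamma$. For $S\subseteq G$, $C(S)$ is the centraliser of $S$ in $G$. The centraliser lattice $\mathfrak{C}(G)$ is the set of all centralisers $C(S)$, $S\subseteq G$, ordered by inclusion, with meet $C(M_1)\wedge C(M_2)=C(M_1)\cap C(M_2)=C(M_1\cup M_2)$ and join $C(M_1)\vee C(M_2)$ defined as the intersection of all centralisers containing both $C(M_1)$ and $C(M_2)$. A canonical centraliser is a centraliser $C(Y)$ with $Y\subseteq X$. *)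

(* Defs.v *)
(* Partially commutative group G(Gamma) modelled concretely:
   elements are words over X^{+-1}, equality is the congruence generated by
   free cancellation and commutation of letters whose generators are adjacent. *)
From mathcomp Require Import all_boot.
Set Implicit Arguments. Unset Strict Implicit. Unset Printing Implicit Defensive.

Section PCGroup.
Variables (T : finType) (e : rel T).

(* a letter (x, true) is x, (x, false) is x^-1 *)
Definition letter := (T * bool)%type.
Definition word := seq letter.

Inductive pc_step : word -> word -> Prop :=
| pc_red (u v : word) (x : T) (b : bool) :
    pc_step (u ++ (x, b) :: (x, ~~ b) :: v) (u ++ v)
| pc_comm (u v : word) (a c : letter) :
    e a.1 c.1 -> pc_step (u ++ a :: c :: v) (u ++ c :: a :: v).

Inductive pc_eq : word -> word -> Prop :=
| pc_eq_step w1 w2 : pc_step w1 w2 -> pc_eq w1 w2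
| pc_eq_refl w : pc_eq w w
| pc_eq_sym w1 w2 : pc_eq w1 w2 -> pc_eq w2 w1
| pc_eq_trans w1 w2 w3 : pc_eq w1 w2 -> pc_eq w2 w3 -> pc_eq w1 w3.

Definition pc_mul (g h : word) : word := g ++ h.

Definition centraliser (S : word -> Prop) : word -> Prop :=
  fun g => forall s, S s -> pc_eq (pc_mul g s) (pc_mul s g).

Definition is_centraliser (A : word -> Prop) : Prop :=
  exists S : word -> Prop, forall g, A g <-> centraliser S g.

Definition cjoin (A B : word -> Prop) : word -> Prop :=
  fun g => forall C : word -> Prop, is_centraliser C ->
    (forall h, A h -> C h) -> (forall h, B h -> C h) -> C g.

Definition cmeet (A B : word -> Prop) : word -> Prop := fun g => A g /\ B g.

Definition canon (Y : {set T}) : word -> Prop :=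
  centraliser (fun w => exists2 y, y \in Y & w = [:: (y, true)]).

End PCGroup.
Arguments cmeet {T} A B g.
Arguments cjoin {T} e A B g.

(* Main.v *)
Require Import Defs.
From mathcomp Require Import all_boot.
Set Implicit Arguments. Unset Strict Implicit. Unset Printing Implicit Defensive.

Section WP.
Variables (T : finType) (e : rel T).
Hypothesis e_sym : symmetric e.
Hypothesis e_irr : irreflexive e.

Local Notation letter := (T * bool)%type.
Local Notation word := (seq letter).

Definition inv (l : letter) : letter := (l.1, ~~ l.2).
Definition comm (l m : letter) : bool := e l.1 m.1.

Lemma comm_sym l m : comm l m = comm m l.
Proof. by rewrite /comm e_sym. Qed.

Lemma comm_neq l m : comm l m -> l.1 != m.1.
Proof. by rewrite /comm; apply: contraTneq => ->; rewrite e_irr. Qed.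

Lemma comm_invl l m : comm (inv l) m = comm l m. Proof. by []. Qed.
Lemma comm_invr l m : comm l (inv m) = comm l m. Proof. by []. Qed.
Lemma inv_inv l : inv (inv l) = l. Proof. by case: l => x b; rewrite /inv /= negbK. Qed.
Lemma inv_fst l : (inv l).1 = l.1. Proof. by []. Qed.

Fixpoint canc (l : letter) (w : word) : option word :=
  match w with
  | [::] => None
  | c :: w' => if c == inv l then Some w'
               else if comm l c then omap (cons c) (canc l w') else None
  end.

Definition act (l : letter) (w : word) : word :=
  if canc l w is Some w' then w' else l :: w.

Fixpoint reduced (w : word) : bool :=
  if w is a :: q then (canc a q == None) && reduced q else true.

Inductive sw_step : word -> word -> Prop :=
| SwStep u v a c : comm a c -> sw_step (u ++ a :: c :: v) (u ++ c :: a :: v).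

Inductive sw_eq : word -> word -> Prop :=
| sw_s w1 w2 : sw_step w1 w2 -> sw_eq w1 w2
| sw_refl w : sw_eq w w
| sw_sym w1 w2 : sw_eq w1 w2 -> sw_eq w2 w1
| sw_trans w1 w2 w3 : sw_eq w1 w2 -> sw_eq w2 w3 -> sw_eq w1 w3.

Lemma sw_cat p q w1 w2 : sw_eq w1 w2 -> sw_eq (p ++ w1 ++ q) (p ++ w2 ++ q).
Proof.
elim=> [x y [u v a c h]|w|x y _ IH|x y z _ IH1 _ IH2].
- have -> : p ++ (u ++ a :: c :: v) ++ q = (p ++ u) ++ a :: c :: (v ++ q)
    by rewrite -!catA.
  have -> : p ++ (u ++ c :: a :: v) ++ q = (p ++ u) ++ c :: a :: (v ++ q)
    by rewrite -!catA.
  by apply: sw_s; apply: SwStep.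
- exact: sw_refl.
- exact: sw_sym.
- exact: sw_trans IH2.
Qed.

Lemma sw_cons a w1 w2 : sw_eq w1 w2 -> sw_eq (a :: w1) (a :: w2).
Proof. by move=> h; have := sw_cat [:: a] [::] h; rewrite !cats0. Qed.

Lemma sw_catl p w1 w2 : sw_eq w1 w2 -> sw_eq (p ++ w1) (p ++ w2).
Proof. by move=> h; have := sw_cat p [::] h; rewrite !cats0. Qed.

Lemma sw_swap a c v : comm a c -> sw_eq (a :: c :: v) (c :: a :: v).
Proof. by move=> h; apply: sw_s; apply: (SwStep [::]). Qed.

Lemma sw_move l p q : all (comm l) p -> sw_eq (l :: p ++ q) (p ++ l :: q).
Proof.
elim: p => [|c p IH] /=; first by move=> _; exact: sw_refl.
case/andP=> h1 h2; apply: sw_trans (sw_swap _ h1) _; exact: sw_cons (IH h2).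
Qed.

Lemma canc_cat l x y : canc l (x ++ y) =
  match canc l x with
  | Some x' => Some (x' ++ y)
  | None => if all (comm l) x then omap (cat x) (canc l y) else None
  end.
Proof.
elim: x => [|c x IH] /=; first by case: (canc l y).
case: ifP => // hc; case: ifP => hl /=; last by [].
rewrite IH; case: (canc l x) => //=; case: (all _ _) => //; by case: (canc l y).
Qed.

Lemma canc_Some l w w' : canc l w = Some w' ->
  exists p q, [/\ w = p ++ inv l :: q, all (comm l) p & w' = p ++ q].
Proof.
elim: w w' => [|c w IH] w' //=; case: ifP => [/eqP -> [<-]|_].
  by exists [::], w.
case: ifP => // hc; case E: (canc l w) => [w1|] //= [<-].
have [p [q [-> hp ->]]] := IH _ E; by exists (c :: p), q; rewrite /= hc.
Qed.

Lemma canc_mem l w w' : canc l w = Some w' -> inv l \in w.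
Proof. by case/canc_Some=> p [q [-> _ _]]; rewrite mem_cat inE eqxx orbT. Qed.

Lemma canc_allcomm l p : all (comm l) p -> canc l p = None.
Proof.
elim: p => [|c p IH] //= /andP[h1 h2]; rewrite h1 IH //=.
case: ifP => // /eqP ec; move: h1; rewrite ec comm_invr /comm e_irr.
by [].
Qed.

Lemma reduced_cat x y : reduced (x ++ y) -> reduced y.
Proof. by elim: x => //= a x IH /andP[_ /IH]. Qed.


Lemma eq_inv_fst a l : a = inv l -> a.1 = l.1.
Proof. by move->. Qed.

Lemma canc_swap l a c v : comm a c ->
  (canc l (a :: c :: v) = None /\ canc l (c :: a :: v) = None) \/
  exists s s', [/\ canc l (a :: c :: v) = Some s, canc l (c :: a :: v) = Some s'
               & sw_eq s s'].
Proof.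
move=> hac /=.
have hne := comm_neq hac.
case: (eqVneq a (inv l)) => [ea|na].
  have hc : c != inv l.
    by apply: contra_neq hne => ec; rewrite ea ec.
  rewrite (negPf hc).
  have -> : comm l c by rewrite /comm -(eq_inv_fst ea).
  right; exists (c :: v), (c :: v); split => //; exact: sw_refl.
case: (eqVneq c (inv l)) => [ec|nc].
  have -> : comm l a by rewrite /comm -(eq_inv_fst ec) e_sym.
  right; exists (a :: v), (a :: v); split => //; exact: sw_refl.
case hla: (comm l a); case hlc: (comm l c) => /=; try by left.
case: (canc l v) => [s|] /=; last by left.
right; exists (a :: c :: s), (c :: a :: s); split => //; exact: sw_swap.
Qed.

Lemma act_sw l w w' : sw_eq w w' -> sw_eq (act l w) (act l w').
Proof.
elim=> [x y [u v a c h]|w0|x y _ IH|x y z _ IH1 _ IH2].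
- rewrite /act !canc_cat.
  have hall : all (comm l) (a :: c :: v) = all (comm l) (c :: a :: v).
    by rewrite /= andbCA.
  case: (canc l u) => [u'|].
    by apply: sw_catl; apply: sw_swap.
  case: (all (comm l) u); last by apply: sw_cons; apply: sw_catl; apply: sw_swap.
  case: (canc_swap l v h) => [[-> ->]|[s [s' [-> -> hs]]]] /=.
    by apply: sw_cons; apply: sw_catl; apply: sw_swap.
  exact: sw_catl.
- exact: sw_refl.
- exact: sw_sym.
- exact: sw_trans IH2.
Qed.


Lemma reduced_del p d q : reduced (p ++ d :: q) ->
  all (comm d) p || all (comm d) q -> reduced (p ++ q).
Proof.
elim: p => [|a p IH] /=; first by case/andP.
case/andP=> /eqP h1 h2 hc.
rewrite IH //; last first.
  by case/orP: hc => [/andP[_ ->]|->]; rewrite ?orbT.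
rewrite andbT; apply/eqP; move: h1; rewrite !canc_cat.
case: (canc a p) => // ; case: (all (comm a) p) => //.
rewrite /=; case: ifP => // _.
case had: (comm a d).
  by case: (canc a q).
move=> _; case E: (canc a q) => [z|] //=.
have hm := canc_mem E.
case/orP: hc => [/andP[hda _]|hq].
  by move: hda; rewrite comm_sym had.
by move/allP: hq => /(_ _ hm); rewrite comm_invr comm_sym had.
Qed.

Lemma act_reduced l w : reduced w -> reduced (act l w).
Proof.
rewrite /act; case E: (canc l w) => [w'|] hw; last by rewrite /= E eqxx.
have [p [q [ew hp ->]]] := canc_Some E.
by apply: (reduced_del (d := inv l)); rewrite -?ew // hp.
Qed.

Lemma act_inv l w : reduced w -> sw_eq (act l (act (inv l) w)) w.
Proof.
rewrite {2}/act; case E: (canc (inv l) w) => [w'|] hw.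
  have [p [q [ew hp ->]]] := canc_Some E.
  rewrite inv_inv in ew.
  have hq : canc l q = None.
    by move: hw; rewrite ew => /reduced_cat /= /andP[/eqP].
  have hp' : all (comm l) p by [].
  rewrite /act canc_cat (canc_allcomm hp') hp' hq ew.
  exact: sw_move.
by rewrite /act /= eqxx; exact: sw_refl.
Qed.

Lemma K1 a c w wc wa : comm a c -> canc c w = Some wc -> canc a w = Some wa ->
  exists x, canc a wc = Some x /\ canc c wa = Some x.
Proof.
move=> hac; elim: w wc wa => [|d w IH] wc wa //=.
case: (eqVneq d (inv c)) => [ed|nd].
  move=> [<-]; have hda : d != inv a.
    by rewrite ed; apply: contra_neq (comm_neq hac) => /eq_inv_fst.
  rewrite (negPf hda) ed comm_invr hac.
  case E: (canc a w) => [wa'|] //= [<-]; exists wa'; by rewrite /= eqxx.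
case: ifP => // hcd; case Ec: (canc c w) => [wc'|] //= [<-].
case: (eqVneq d (inv a)) => [ea|na].
  move=> [<-]; exists wc'; by rewrite /= ea eqxx Ec.
case: ifP => // had; case Ea: (canc a w) => [wa'|] //= [<-].
have [x [h1 h2]] := IH _ _ Ec Ea.
by exists (d :: x); rewrite /= (negPf na) had h1 (negPf nd) hcd h2.
Qed.

Lemma K2 a c w wc : comm a c -> canc c w = Some wc -> canc a w = None ->
  canc a wc = None.
Proof.
move=> hac; elim: w wc => [|d w IH] wc //=.
case: (eqVneq d (inv c)) => [ed|nd].
  move=> [<-]; have hda : d != inv a.
    by rewrite ed; apply: contra_neq (comm_neq hac) => /eq_inv_fst.
  rewrite (negPf hda) ed comm_invr hac.
  by case: (canc a w).
case: ifP => // hcd; case Ec: (canc c w) => [wc'|] //= [<-].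
case: (eqVneq d (inv a)) => // na /=; rewrite (negPf na).
case: ifP => // had; case Ea: (canc a w) => //= _.
by rewrite (IH _ Ec Ea).
Qed.

Lemma act_comm a c w : comm a c -> sw_eq (act a (act c w)) (act c (act a w)).
Proof.
move=> hac; have hca : comm c a by rewrite comm_sym.
have n1 : (a == inv c) = false.
  by apply/negbTE; apply: contra_neq (comm_neq hac) => /eq_inv_fst.
have n2 : (c == inv a) = false.
  by apply/negbTE; apply: contra_neq (comm_neq hca) => /eq_inv_fst.
rewrite /act; case Ec: (canc c w) => [wc|]; case Ea: (canc a w) => [wa|].
- have [x [-> ->]] := K1 hac Ec Ea; exact: sw_refl.
- by rewrite (K2 hac Ec Ea) /= n1 hca Ec /=; exact: sw_refl.
- by rewrite (K2 hca Ea Ec) /= n2 hac Ea /=; exact: sw_refl.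
- rewrite /= n1 n2 hac hca Ea Ec /=.
  exact: sw_swap.
Qed.


Definition act_word (g w : word) : word := foldr act w g.

Lemma act_word_sw u w w' : sw_eq w w' -> sw_eq (act_word u w) (act_word u w').
Proof. by elim: u => //= l u IH h; apply: act_sw; apply: IH. Qed.

Lemma act_word_reduced u w : reduced w -> reduced (act_word u w).
Proof. by elim: u => //= l u IH h; apply: act_reduced; apply: IH. Qed.

Lemma act_word_cat u v w : act_word (u ++ v) w = act_word u (act_word v w).
Proof. by rewrite /act_word foldr_cat. Qed.

Lemma step_sw g h w : pc_step e g h -> reduced w ->
  sw_eq (act_word g w) (act_word h w).
Proof.
case=> [u v x b|u v a c hac] hw; rewrite !act_word_cat; apply: act_word_sw => /=.
- have := act_inv (x, b) (act_word_reduced v hw); by [].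
- exact: act_comm.
Qed.

Lemma pc_sw g h w : pc_eq e g h -> reduced w ->
  sw_eq (act_word g w) (act_word h w).
Proof.
move=> H; elim: H w => [x y hs|x|x y _ IH|x y z _ IH1 _ IH2] w hw.
- exact: step_sw.
- exact: sw_refl.
- by apply: sw_sym; apply: IH.
- by apply: sw_trans (IH1 _ hw) (IH2 _ hw).
Qed.

Lemma pc_eq_cat p q w1 w2 : pc_eq e w1 w2 -> pc_eq e (p ++ w1 ++ q) (p ++ w2 ++ q).
Proof.
elim=> [x y hs|w|x y _ IH|x y z _ IH1 _ IH2].
- apply: pc_eq_step; case: hs => [u v x0 b|u v a c h].
    have -> : p ++ (u ++ [:: (x0, b), (x0, ~~ b) & v]) ++ q
      = (p ++ u) ++ [:: (x0, b), (x0, ~~ b) & (v ++ q)] by rewrite -!catA.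
    have -> : p ++ (u ++ v) ++ q = (p ++ u) ++ (v ++ q) by rewrite -!catA.
    exact: pc_red.
  have -> : p ++ (u ++ [:: a, c & v]) ++ q = (p ++ u) ++ [:: a, c & (v ++ q)]
    by rewrite -!catA.
  have -> : p ++ (u ++ [:: c, a & v]) ++ q = (p ++ u) ++ [:: c, a & (v ++ q)]
    by rewrite -!catA.
  exact: pc_comm.
- exact: pc_eq_refl.
- exact: pc_eq_sym.
- exact: pc_eq_trans IH2.
Qed.

Lemma pc_catl p w1 w2 : pc_eq e w1 w2 -> pc_eq e (p ++ w1) (p ++ w2).
Proof. by move=> h; have := pc_eq_cat p [::] h; rewrite !cats0. Qed.
Lemma pc_catr q w1 w2 : pc_eq e w1 w2 -> pc_eq e (w1 ++ q) (w2 ++ q).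
Proof. by move=> h; have := pc_eq_cat [::] q h. Qed.
Lemma pc_cons a w1 w2 : pc_eq e w1 w2 -> pc_eq e (a :: w1) (a :: w2).
Proof. exact: (pc_catl [:: a]). Qed.

Lemma sw_pc w1 w2 : sw_eq w1 w2 -> pc_eq e w1 w2.
Proof.
elim=> [x y [u v a c h]|w|x y _ IH|x y z _ IH1 _ IH2].
- by apply: pc_eq_step; apply: pc_comm.
- exact: pc_eq_refl.
- exact: pc_eq_sym.
- exact: pc_eq_trans IH2.
Qed.

Lemma act_pc l w : pc_eq e (act l w) (l :: w).
Proof.
rewrite /act; case E: (canc l w) => [w'|]; last exact: pc_eq_refl.
have [p [q [-> hp ->]]] := canc_Some E.
apply: pc_eq_sym; apply: pc_eq_trans (sw_pc (sw_move _ hp)) _.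
case: l {E hp} => x b; rewrite /inv /=.
apply: pc_eq_step; apply: pc_red.
Qed.

Lemma act_word_pc g w : pc_eq e (act_word g w) (g ++ w).
Proof.
elim: g => [|l g IH] /=; first exact: pc_eq_refl.
apply: pc_eq_trans (act_pc _ _) _; exact: pc_cons.
Qed.

Definition nf g := act_word g [::].

Lemma nf_reduced g : reduced (nf g).
Proof. exact: act_word_reduced. Qed.

Lemma nf_pc g : pc_eq e (nf g) g.
Proof. by have := act_word_pc g [::]; rewrite cats0. Qed.

Lemma nf_red r : reduced r -> nf r = r.
Proof.
rewrite /nf; elim: r => //= a r IH /andP[/eqP h1 h2]; by rewrite IH // /act h1.
Qed.

Lemma reduced_pc_sw r1 r2 : reduced r1 -> reduced r2 -> pc_eq e r1 r2 -> sw_eq r1 r2.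
Proof. by move=> h1 h2 h; rewrite -(nf_red h1) -(nf_red h2); apply: pc_sw. Qed.

Lemma sw_filter y v : y != v -> ~~ e y v -> forall w w', sw_eq w w' ->
  [seq l <- w | (l.1 == y) || (l.1 == v)] = [seq l <- w' | (l.1 == y) || (l.1 == v)].
Proof.
move=> nyv nevy w w'; elim=> [x z [u u' a c h]|//|x z _ -> //|x z z' _ -> _ -> //].
rewrite !filter_cat /=.
have H : ~~ (((a.1 == y) || (a.1 == v)) && ((c.1 == y) || (c.1 == v))).
  apply/negP => /andP[/orP[]/eqP ha /orP[]/eqP hc]; move: h;
    by rewrite /comm ha hc ?e_irr ?(negPf nevy) // e_sym (negPf nevy).
by case: ((a.1 == y) || (a.1 == v)) H; case: ((c.1 == y) || (c.1 == v)).
Qed.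


Definition gcomm (g s : word) := pc_eq e (g ++ s) (s ++ g).
Definition lcomm (l m : letter) := (l.1 == m.1) || e l.1 m.1.

Lemma pc_cancel l w : pc_eq e (l :: inv l :: w) w.
Proof. case: l => x b; rewrite /inv /=; apply: pc_eq_step; exact: (@pc_red T e [::] w x b). Qed.

Lemma pc_cancel' l w : pc_eq e (inv l :: l :: w) w.
Proof. by have := pc_cancel (inv l) w; rewrite inv_inv. Qed.

Lemma pc_cancel_r l w : pc_eq e (w ++ [:: l; inv l]) w.
Proof. by have := pc_catl w (pc_cancel l [::]); rewrite cats0. Qed.

Lemma pc_cancel_r' l w : pc_eq e (w ++ [:: inv l; l]) w.
Proof. by have := pc_cancel_r (inv l) w; rewrite inv_inv. Qed.

Lemma gc_sym g s : gcomm g s -> gcomm s g.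
Proof. exact: pc_eq_sym. Qed.

Lemma gc_cat g s1 s2 : gcomm g s1 -> gcomm g s2 -> gcomm g (s1 ++ s2).
Proof.
rewrite /gcomm => h1 h2.
rewrite catA; apply: pc_eq_trans (pc_catr s2 h1) _; rewrite -!catA; exact: pc_catl.
Qed.

Lemma gc_catl g1 g2 s : gcomm g1 s -> gcomm g2 s -> gcomm (g1 ++ g2) s.
Proof. by move=> h1 h2; apply: gc_sym; apply: gc_cat; apply: gc_sym. Qed.

Lemma gc_pcl g g' s : pc_eq e g g' -> gcomm g s -> gcomm g' s.
Proof.
rewrite /gcomm => h hs; apply: pc_eq_trans (pc_catr _ (pc_eq_sym h)) _.
exact: pc_eq_trans hs (pc_catl _ h).
Qed.

Lemma gc_pcr g s s' : pc_eq e s s' -> gcomm g s -> gcomm g s'.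
Proof. by move=> h /gc_sym hs; apply: gc_sym; apply: gc_pcl h hs. Qed.

Lemma gc_nil g : gcomm g [::].
Proof. by rewrite /gcomm cats0; exact: pc_eq_refl. Qed.

Lemma gc_inv g l : gcomm g [:: l] -> gcomm g [:: inv l].
Proof.
move=> h.
(* g l' ~ l' l g l' ~ l' g l l' ~ l' g *)
have h1 : pc_eq e (g ++ [:: inv l]) (inv l :: (l :: g) ++ [:: inv l]).
  apply: pc_eq_sym; rewrite /=; exact: pc_cancel'.
apply: pc_eq_trans h1 _.
have h2 : pc_eq e (inv l :: (l :: g) ++ [:: inv l]) (inv l :: (g ++ [:: l]) ++ [:: inv l]).
  apply: pc_cons; apply: pc_catr; apply: pc_eq_sym; exact: h.
apply: pc_eq_trans h2 _.
rewrite -catA /=; apply: pc_cons; exact: pc_cancel_r.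
Qed.

Lemma gc_word g s : (forall l, l \in s -> gcomm g [:: l]) -> gcomm g s.
Proof.
elim: s => [|l s IH] h; first exact: gc_nil.
apply: (gc_cat (s1 := [:: l])); first by apply: h; rewrite inE eqxx.
by apply: IH => m hm; apply: h; rewrite inE hm orbT.
Qed.

Lemma gc_letter l m : lcomm l m -> gcomm [:: l] [:: m].
Proof.
rewrite /lcomm /gcomm /=; case/orP=> [/eqP|hlm]; last first.
  exact: pc_eq_step (pc_comm [::] [::] hlm).
case: l => x b; case: m => x' b' /= <-.
case: (eqVneq b' b) => [->|nb]; first exact: pc_eq_refl.
have -> : b' = ~~ b by case: b b' nb {x'} => [] [].
apply: pc_eq_trans (pc_cancel (x, b) [::]) _; apply: pc_eq_sym.
exact: (pc_cancel' (x, b) [::]).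
Qed.

Lemma gc_lword l w : all (lcomm l) w -> gcomm [:: l] w.
Proof. by move/allP=> h; apply: gc_word => m /h; apply: gc_letter. Qed.

Definition st (y x : T) := (x == y) || e x y.

Lemma notred_end r L : reduced r -> ~~ reduced (r ++ [:: L]) ->
  exists p q, r = p ++ inv L :: q /\ all (comm (inv L)) q.
Proof.
elim: r => [|a r IH] /=; first by rewrite /= ?andbT.
case/andP=> /eqP h1 h2; rewrite negb_and; case/orP; last first.
  by move/(IH h2)=> [p [q [-> hq]]]; exists (a :: p), q.
rewrite canc_cat h1; case: ifP => //= hall.
case: ifP => [/eqP hL _|_]; last by case: ifP.
by exists [::], r; rewrite hL inv_inv.
Qed.

Lemma centr_red y n r : size r <= n -> reduced r -> gcomm r [:: (y, true)] ->
  exists w, pc_eq e r w /\ all (fun l => st y l.1) w.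
Proof.
elim: n r => [|n IH] r.
  by rewrite leqn0 => /nilP -> _ _; exists [::]; split => //; exact: pc_eq_refl.
case: r => [|a r']; first by move=> _ _ _; exists [::]; split => //; exact: pc_eq_refl.
move=> hs hr hc; rewrite /= ltnS in hs.
case: (boolP (st y a.1)) => hst.
  have ha : gcomm [:: inv a] [:: (y, true)].
    by apply: gc_letter; rewrite /lcomm /=; move: hst; rewrite /st.
  have hc' : gcomm r' [:: (y, true)].
    apply: (gc_pcl (pc_cancel' a r')).
    exact: (gc_catl (g1 := [:: inv a]) ha hc).
  move: hr => /= /andP[_ hr'].
  have [w [hw1 hw2]] := IH r' hs hr' hc'.
  by exists (a :: w); split; [exact: pc_cons | rewrite /= hst].
case: (boolP (reduced ((a :: r') ++ [:: (y, true)]))) => hrr; last first.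
  have [p [q [er hq]]] := notred_end hr hrr.
  set r1 := p ++ q.
  have hr1 : reduced r1 by apply: (reduced_del (d := inv (y, true))); rewrite -?er // hq orbT.
  have hsz : size r1 <= n.
    have := f_equal size er; rewrite /= !size_cat /= addnS => [[<-]] //.
  have e1 : pc_eq e (a :: r') (r1 ++ [:: inv (y, true)]).
    rewrite er /r1 -catA; apply: pc_catl; have := sw_move [::] hq; rewrite cats0.
    exact: sw_pc.
  have e2 : pc_eq e r1 ((a :: r') ++ [:: (y, true)]).
    apply: pc_eq_sym; apply: pc_eq_trans (pc_catr _ e1) _.
    rewrite -catA; exact: pc_cancel_r'.
  have hc1 : gcomm r1 [:: (y, true)].
    apply: gc_pcl (pc_eq_sym e2) _; apply: gc_catl hc _; exact: pc_eq_refl.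
  have [w [hw1 hw2]] := IH r1 hsz hr1 hc1.
  exists (w ++ [:: inv (y, true)]); split.
    exact: pc_eq_trans e1 (pc_catr _ hw1).
  by rewrite all_cat hw2 /= /st eqxx.
exfalso.
have hyr : reduced ((y, true) :: a :: r').
  move: (hr) => /= /andP[hr1 hr2]; rewrite /= hr1 hr2 !andbT.
  have -> : (a == inv (y, true)) = false.
    by apply/negbTE; apply: contra hst => /eqP ->; rewrite /st eqxx.
  have -> : comm (y, true) a = false.
    by move: hst; rewrite /st /comm /= negb_or e_sym => /andP[_ /negbTE ->].
  by [].
have hsw := reduced_pc_sw hyr hrr (pc_eq_sym hc).
have nya : y != a.1 by move: hst; rewrite /st negb_or eq_sym => /andP[].
have nea : ~~ e y a.1 by move: hst; rewrite /st negb_or e_sym => /andP[].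
have := sw_filter nya nea hsw; rewrite /= eqxx /= eqxx orbT /=.
by case=> /(f_equal fst) /= /eqP; rewrite (negPf nya).
Qed.

Lemma centr y g : gcomm g [:: (y, true)] ->
  exists w, pc_eq e g w /\ all (fun l => st y l.1) w.
Proof.
move=> h; have [w [h1 h2]] := centr_red (leqnn _) (nf_reduced g)
  (gc_pcl (pc_eq_sym (nf_pc g)) h).
exists w; split => //; exact: pc_eq_trans (pc_eq_sym (nf_pc g)) h1.
Qed.


Definition ret (A : pred T) (w : word) := [seq l <- w | A l.1].

Lemma ret_pc A w w' : pc_eq e w w' -> pc_eq e (ret A w) (ret A w').
Proof.
elim=> [x y hs|w0|x y _ IH|x y z _ IH1 _ IH2].
- case: hs => [u v x0 b|u v a c h]; rewrite /ret !filter_cat /=.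
    case: (A x0); last exact: pc_eq_refl.
    by apply: pc_eq_step; apply: pc_red.
  case: (A a.1); case: (A c.1); try exact: pc_eq_refl.
  by apply: pc_eq_step; apply: pc_comm.
- exact: pc_eq_refl.
- exact: pc_eq_sym.
- exact: pc_eq_trans IH2.
Qed.

Lemma ret_id (A : pred T) w : all (fun l => A l.1) w -> ret A w = w.
Proof. by move=> h; rewrite /ret; apply/all_filterP. Qed.

Lemma factA_seq (s : seq T) g : (forall y, y \in s -> gcomm g [:: (y, true)]) ->
  exists w, pc_eq e g w /\ all (fun l => all (fun y => st y l.1) s) w.
Proof.
elim: s g => [|y s IH] g h.
  by exists g; split; [exact: pc_eq_refl | apply/allP].
have hs : forall z, z \in s -> gcomm g [:: (z, true)].
  by move=> z hz; apply: h; rewrite inE hz orbT.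
have [w1 [hw1 hw1']] := IH g hs.
have [w2 [hw2 hw2']] := centr (h y (mem_head _ _)).
pose P := fun x => all (fun y => st y x) s.
exists (ret P w2); split.
  apply: (pc_eq_trans hw1); rewrite -(@ret_id P w1 hw1'); apply: ret_pc.
  exact: pc_eq_trans (pc_eq_sym hw1) hw2.
apply/allP => l; rewrite mem_filter => /andP[h1 h2].
by rewrite /= (allP hw2' _ h2).
Qed.

Definition perpS (Y : {set T}) : {set T} := [set x | all (fun y => st y x) (enum Y)].

Lemma factA (Y : {set T}) g : (forall y, y \in Y -> gcomm g [:: (y, true)]) ->
  exists w, pc_eq e g w /\ all (fun l => l.1 \in perpS Y) w.
Proof.
move=> h; have hs : forall y, y \in enum Y -> gcomm g [:: (y, true)].
  by move=> y hy; apply: h; rewrite -mem_enum.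
have [w [h1 h2]] := factA_seq hs.
exists w; split => //; apply/allP => l hl; rewrite inE; exact: (allP h2).
Qed.

Lemma canonE (Z : {set T}) g : canon e Z g <-> forall z, z \in Z -> gcomm g [:: (z, true)].
Proof.
split.
  by move=> h z hz; apply: h; exists z.
by move=> h s [z hz ->]; apply: h.
Qed.

Lemma perpS_st (Y : {set T}) x y : x \in perpS Y -> y \in Y -> st y x.
Proof. by rewrite inE => /allP h hy; apply: h; rewrite mem_enum. Qed.

Lemma gc_gen (Z : {set T}) g w : (forall z, z \in Z -> gcomm g [:: (z, true)]) ->
  all (fun l => l.1 \in Z) w -> gcomm g w.
Proof.
move=> h /allP hw; apply: gc_word => [[x b]] /hw /= hx.
case: b; first exact: h.
by have := gc_inv (h _ hx).
Qed.

Lemma canon_sub (Y Z : {set T}) h : (forall z, z \in Z -> z \in perpS (perpS Y)) ->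
  canon e Y h -> canon e Z h.
Proof.
move=> hZ /canonE hh; apply/canonE => z hz.
have [w [hw1 hw2]] := factA hh.
apply: gc_pcl (pc_eq_sym hw1) _; apply: gc_sym; apply: gc_lword.
apply/allP => l hl; rewrite /lcomm /=.
exact: (perpS_st (hZ _ hz) (allP hw2 _ hl)).
Qed.

Lemma letter_canon (Y : {set T}) x : x \in perpS Y -> canon e Y [:: (x, true)].
Proof.
move=> hx; apply/canonE => y hy; apply: gc_letter.
by rewrite /lcomm /=; exact: (perpS_st hx hy).
Qed.

Lemma dcentr (Y : {set T}) (C S : word -> Prop) s :
  (forall g, C g <-> centraliser e S g) -> (forall h, canon e Y h -> C h) -> S s ->
  exists w, pc_eq e s w /\ all (fun l => l.1 \in perpS (perpS Y)) w.
Proof.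
move=> hS hY hs; apply: factA => x hx.
apply: gc_sym; have := (hS _).1 (hY _ (letter_canon hx)) s hs; by [].
Qed.

Lemma join_canon (Y1 Y2 : {set T}) g :
  cjoin e (canon e Y1) (canon e Y2) g <->
  canon e [set x | (x \in perpS (perpS Y1)) && (x \in perpS (perpS Y2))] g.
Proof.
set W := [set x | _]; split.
  move=> H; apply: H.
  - by exists (fun w => exists2 y, y \in W & w = [:: (y, true)]).
  - move=> h0 hh; apply: (@canon_sub Y1 W h0 _ hh) => z; rewrite inE => /andP[] //.
  - move=> h0 hh; apply: (@canon_sub Y2 W h0 _ hh) => z; rewrite inE => /andP[] //.
move=> hg C [S hS] h1 h2; apply/hS => s hs.
have [w1 [hw1 hw1']] := dcentr hS h1 hs.
have [w2 [hw2 hw2']] := dcentr hS h2 hs.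
pose P := fun x => x \in perpS (perpS Y1).
have e3 : pc_eq e s (ret P w2).
  apply: (pc_eq_trans hw1); rewrite -(ret_id hw1'); apply: ret_pc.
  exact: pc_eq_trans (pc_eq_sym hw1) hw2.
apply: gc_pcr (pc_eq_sym e3) _.
apply: (gc_gen (Z := W)); first by apply/canonE.
apply/allP => l; rewrite mem_filter => /andP[h1' h2'].
by rewrite inE; apply/andP; split; [exact: h1' | exact: (allP hw2' _ h2')].
Qed.

End WP.

Theorem lemma3p1 (T : finType) (e : rel T)
  (e_sym : symmetric e) (e_irr : irreflexive e) (Y1 Y2 : {set T}) :
  (exists Z : {set T}, forall g,
      cmeet (canon e Y1) (canon e Y2) g <-> canon e Z g) /\
  (exists Z : {set T}, forall g,
      cjoin e (canon e Y1) (canon e Y2) g <-> canon e Z g).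
Proof.
split.
  exists (Y1 :|: Y2) => g; rewrite /cmeet; split.
    case=> /(canonE e) h1 /(canonE e) h2; apply/(canonE e) => z.
    by rewrite inE => /orP[/h1|/h2].
  move/(canonE e) => h; split; apply/(canonE e) => z hz; apply: h;
    by rewrite inE hz ?orbT.
eexists => g; exact: join_canon.
Qed.
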